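(* Let $\mathscr{O}$ be a reduced operad in $\mathbbm{k}$-vector spaces with $\mathscr{O}(1)=\mathbbm{k}$ (generated by the unit), and let $\mu\in\mathscr{O}(2)$ satisfy the right Leibniz condition. Then the image of the functor $\alpha:{\bm{\Sigma}}\text{-mod}\to\mathcal{F}_{\mathscr{O}}$ lies in $\mathcal{F}^\mu_{\mathscr{O}}$. In particular, every simple object of $\mathcal{F}_{\mathscr{O}}$ belongs to $\mathcal{F}^\mu_{\mathscr{O}}$.
   Context: Reduced means $\mathscr{O}(0)=0$. $\mathbf{Cat}\,\mathscr{O}$ is the $\mathbbm{k}$-linear PROP with objects $\mathbb{N}$ and $\mathbf{Cat}\,\mathscr{O}(m,n)=\bigoplus_{f:\{1..m\}\to\{1..n\}}\bigotimes_{i}\mathscr{O}(|f^{-1}(i)|)$, with $\boxplus$ addition on objects; $\mathcal{F}_{\mathscr{O}}$ is the category of $\mathbbm{k}$-linear functors $\mathbf{Cat}\,\mathscr{O}\to\mathbbm{k}$-vector spaces. ${\bm{\Sigma}}$-mod is the category of functors from finite sets and bijections to $\mathbbm{k}$-vector spaces. $\alpha$ sends a ${\bm{\Sigma}}$-module $M$ to the functor $n\mapsto M(n)$ on which $\mathbf{Cat}\,\mathscr{O}(n,n)\cong\mathbbm{k}[\mathfrak{S}_n]$ acts via the $\mathfrak{S}_n$-action and all morphisms in $\mathbf{Cat}\,\mathscr{O}(s,t)$ with $s\ne t$ act by zero (restriction along the augmentation $\mathscr{O}\to I$ to the unit operad). $\delta F(n)=F(n+1)$ with $\xi$ acting by $F(\xi\boxplus\mathrm{Id}_1)$.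 For $1\le i\le n$, $\mu_i(n)\in\mathbf{Cat}\,\mathscr{O}(n+1,n)$ is given by the map $j\mapsto j$ ($j\le n$), $n+1\mapsto i$, identity on singleton fibres and $\mu$ with inputs $(i,n+1)$ on the fibre over $i$; $\widetilde\mu_F(n)=F(\sum_i\mu_i(n)):\delta F(n)\to F(n)$. The right Leibniz condition: for all $n$ and $\nu\in\mathscr{O}(n)$, $\mu\circ(\nu\boxplus\mathrm{Id}_1)=\nu\circ\sum_{i=1}^n\mu_i(n)$ in $\mathscr{O}(n+1)$; under it $\widetilde\mu_F:\delta F\to F$ is natural. $\mathcal{F}^\mu_{\mathscr{O}}$ is the full subcategory of $F$ with $\widetilde\mu_F=0$. *)

(* Defs.v *)
From HB Require Import structures.
From mathcomp Require Import all_boot all_order all_algebra all_fingroup.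

Set Implicit Arguments.
Unset Strict Implicit.
Unset Printing Implicit Defensive.

Import GRing.Theory.
Local Open Scope ring_scope.

Section OperadDefs.
Variable k : fieldType.

Definition fibS m n (f : {ffun 'I_m -> 'I_n}) (i : 'I_n) : {set 'I_m} :=
  [set x | f x == i].
Definition fibc m n (f : {ffun 'I_m -> 'I_n}) (i : 'I_n) : nat := #|fibS f i|.

Definition compf m n p (g : {ffun 'I_n -> 'I_p}) (f : {ffun 'I_m -> 'I_n})
  : {ffun 'I_m -> 'I_p} := [ffun x => g (f x)].

Definition idf n : {ffun 'I_n -> 'I_n} := [ffun x => x].

(* For f : m -> n, g : n -> p and c : 'I_p, the restriction of f to
   (g o f)^{-1}(c) -> g^{-1}(c), both fibres being identified with
   ordinals via their increasing enumerations. *)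
Lemma restr_lt m n p (f : {ffun 'I_m -> 'I_n}) (g : {ffun 'I_n -> 'I_p})
  (c : 'I_p) (t : 'I_(fibc (compf g f) c)) :
  (index (f (enum_val (A := fibS (compf g f) c) t)) (enum (fibS g c))
     < fibc g c)%N.
Proof.
rewrite /fibc cardE index_mem mem_enum.
have := enum_valP t; rewrite !inE /compf ffunE; exact.
Qed.

Definition restr m n p (f : {ffun 'I_m -> 'I_n}) (g : {ffun 'I_n -> 'I_p})
  (c : 'I_p) : {ffun 'I_(fibc (compf g f) c) -> 'I_(fibc g c)} :=
  [ffun t => Ordinal (@restr_lt m n p f g c t)].

(* transport between arities (identity when a = b, which is always
   the case where it is used; 0 otherwise) *)
Definition ocast (V : nat -> lmodType k) (a b : nat) (x : V a) : V b :=
  match a =P b with ReflectT e => ecast i (V i) e x | ReflectF _ => 0 end.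
Arguments ocast V a b x : clear implicits.

(* A (symmetric) operad in k-vector spaces, presented by its composition
   along arbitrary maps f : m -> n of finite (ordered) sets:
     ogam f nu (nu_i)_i  =  nu with nu_i plugged into its i-th input,
   the inputs of nu_i being labelled by f^{-1}(i) in increasing order,
   so that the result has inputs 'I_m. *)
Record operad := Operad {
  ob : nat -> lmodType k;
  ounit : ob 1;
  ogam : forall m n (f : {ffun 'I_m -> 'I_n}),
           ob n -> (forall i, ob (fibc f i)) -> ob m
}.
Arguments ogam {o m n}.

(* composition of decorated maps, i.e. composition in Cat O:
   (g, nu') o (f, nu) = (g o f, dcomp f g nu' nu) *)
Definition dcomp (O : operad) m n p (f : {ffun 'I_m -> 'I_n})
  (g : {ffun 'I_n -> 'I_p}) (nu' : forall c, ob O (fibc g c))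
  (nu : forall i, ob O (fibc f i)) : forall c, ob O (fibc (compf g f) c) :=
  fun c => ogam (restr f g c) (nu' c)
    (fun j => ocast (ob O) _ _ (nu (enum_val (A := fibS g c) j))).

(* the identity of n in Cat O: identity map decorated by units *)
Definition udec (O : operad) n : forall i, ob O (fibc (idf n) i) :=
  fun i => ocast (ob O) 1 _ (ounit O).
Arguments dcomp {O m n p} f g nu' nu.
Arguments udec O n : clear implicits.

Definition is_operad (O : operad) : Prop :=
  [/\
      (forall m n (f : {ffun 'I_m -> 'I_n}) nu (a : k) (x y : ob O n),
         ogam f (a *: x + y) nu = a *: ogam f x nu + ogam f y nu),
      (forall m n (f : {ffun 'I_m -> 'I_n}) (x : ob O n)
              (nu : forall i, ob O (fibc f i)) (i : 'I_n) (a : k)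
              (y z : ob O (fibc f i)),
         ogam f x (@dfwith _ _ nu i (a *: y + z))
           = a *: ogam f x (@dfwith _ _ nu i y) + ogam f x (@dfwith _ _ nu i z)),
      (forall m (f : {ffun 'I_m -> 'I_1}) (nu : forall i, ob O (fibc f i)),
         ogam f (ounit O) nu = ocast (ob O) _ m (nu ord0)),
      (forall n (x : ob O n), ogam (idf n) x (udec O n) = x)
    &
      (forall m n p (f : {ffun 'I_m -> 'I_n}) (g : {ffun 'I_n -> 'I_p})
              (x : ob O p) (nu' : forall c, ob O (fibc g c))
              (nu : forall i, ob O (fibc f i)),
         ogam f (ogam g x nu') nu = ogam (compf g f) x (dcomp f g nu' nu))].

Definition reduced (O : operad) : Prop := forall x : ob O 0, x = 0.

Definition unit_arity1 (O : operad) : Prop :=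
  ounit O <> 0 /\ forall x : ob O 1, exists c : k, x = c *: ounit O.

Definition muf n (i : 'I_n) : {ffun 'I_n.+1 -> 'I_n} :=
  [ffun x => if unlift ord_max x is Some y then y else i].

Definition mudec (O : operad) (mu : ob O 2) n (i : 'I_n)
  : forall j, ob O (fibc (muf i) j) :=
  fun j => if j == i then ocast (ob O) 2 _ mu else ocast (ob O) 1 _ (ounit O).

(* the map n+1 -> 2 underlying nu (+) Id_1 *)
Definition hf n : {ffun 'I_n.+1 -> 'I_2} :=
  [ffun x => if x == ord_max then 1 else 0].

Definition hdec (O : operad) n (nu : ob O n) : forall j, ob O (fibc (hf n) j) :=
  fun j => if j == 0 then ocast (ob O) n _ nu else ocast (ob O) 1 _ (ounit O).

(* mu o (nu (+) Id_1) = nu o sum_i mu_i(n)  in O(n+1) = Cat O(n+1,1) *)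
Definition right_leibniz (O : operad) (mu : ob O 2) : Prop :=
  forall n (nu : ob O n),
    ogam (hf n) mu (hdec nu) = \sum_(i < n) ogam (muf i) nu (mudec mu i).

(* A k-linear functor on Cat O(m,n) = (+)_f (x)_i O(|f^{-1}(i)|) is given by
   its values on decorated maps (f, (nu_i)_i), multilinear in the nu_i. *)
Record rep (O : operad) := Rep {
  fob : nat -> lmodType k;
  fact : forall m n (f : {ffun 'I_m -> 'I_n}),
           (forall i, ob O (fibc f i)) -> fob m -> fob n
}.
Arguments fact {O} r {m n} f _ _.
Arguments fob {O} r _.

Definition is_functor (O : operad) (F : rep O) : Prop :=
  [/\ (forall m n (f : {ffun 'I_m -> 'I_n}) nu (a : k) (x y : fob F m),
         fact F f nu (a *: x + y) = a *: fact F f nu x + fact F f nu y),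
      (forall m n (f : {ffun 'I_m -> 'I_n}) (nu : forall i, ob O (fibc f i))
              (i : 'I_n) (a : k) (y z : ob O (fibc f i)) (x : fob F m),
         fact F f (@dfwith _ _ nu i (a *: y + z)) x
           = a *: fact F f (@dfwith _ _ nu i y) x
             + fact F f (@dfwith _ _ nu i z) x),
      (forall n (x : fob F n), fact F (idf n) (udec O n) x = x)
    & (forall m n p (f : {ffun 'I_m -> 'I_n}) (g : {ffun 'I_n -> 'I_p})
              (nu' : forall c, ob O (fibc g c))
              (nu : forall i, ob O (fibc f i)) (x : fob F m),
         fact F (compf g f) (dcomp f g nu' nu) x
           = fact F g nu' (fact F f nu x))].

(* subobjects of F in F_O = subfunctors *)
Definition subfunctor (O : operad) (F : rep O) (G : forall n, fob F n -> Prop)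
  : Prop :=
  [/\ (forall n, G n 0),
      (forall n (a : k) (x y : fob F n), G n x -> G n y -> G n (a *: x + y))
    & (forall m n (f : {ffun 'I_m -> 'I_n}) nu (x : fob F m),
         G m x -> G n (fact F f nu x))].

Arguments subfunctor {O} F G.

Definition simple_obj (O : operad) (F : rep O) : Prop :=
  (exists n (x : fob F n), x <> 0) /\
  forall G, subfunctor F G ->
    (forall n x, G n x -> x = 0) \/ (forall n x, G n x).

(* mu tilde_F(n) = F(sum_i mu_i(n)) : delta F(n) = F(n+1) -> F(n) *)
Definition mutilde (O : operad) (mu : ob O 2) (F : rep O) n (x : fob F n.+1)
  : fob F n := \sum_(i < n) fact F (muf i) (mudec mu i) x.

Arguments mutilde {O} mu F n x.

Definition in_Fmu (O : operad) (mu : ob O 2) (F : rep O) : Prop :=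
  forall n (x : fob F n.+1), mutilde mu F n x = 0.

Arguments in_Fmu {O} mu F.

Record smod := SMod {
  smob : nat -> lmodType k;
  sma : forall n, 'S_n -> smob n -> smob n
}.

(* functor from finite sets & bijections (skeleton: the 'I_n) *)
Definition is_smod (M : smod) : Prop :=
  [/\ (forall n (s : 'S_n) (a : k) (x y : smob M n),
         sma s (a *: x + y) = a *: sma s x + sma s y),
      (forall n (x : smob M n), sma (1%g : 'S_n) x = x)
    & (forall n (s t : 'S_n) (x : smob M n),
         sma (s * t)%g x = sma t (sma s x))].   (* (s * t)%g = t o s *)

Definition mkperm n (f : {ffun 'I_n -> 'I_n}) : 'S_n :=
  match injectiveP f with ReflectT inj => perm inj | ReflectF _ => 1%g end.

(* action of alpha(M) on Cat O(n,n): a decorated map acts through the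
   augmentation eps : O(1) -> k and the Sigma_n-action when all fibres are
   singletons (i.e. f is a bijection), and by 0 otherwise *)
Definition alpha_sq (O : operad) (eps : ob O 1 -> k) (M : smod) n
  (f : {ffun 'I_n -> 'I_n}) (nu : forall i, ob O (fibc f i)) (x : smob M n)
  : smob M n :=
  if [forall i, fibc f i == 1%N]
  then (\prod_(i < n) eps (ocast (ob O) _ 1 (nu i))) *: sma (mkperm f) x
  else 0.

Definition alpha_act (O : operad) (eps : ob O 1 -> k) (M : smod) m n
  : forall f : {ffun 'I_m -> 'I_n},
      (forall i, ob O (fibc f i)) -> smob M m -> smob M n :=
  match m =P n with
  | ReflectT e =>
      ecast q (forall f : {ffun 'I_q -> 'I_n},
                 (forall i, ob O (fibc f i)) -> smob M q -> smob M n)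
            (esym e) (@alpha_sq O eps M n)
  | ReflectF _ => fun _ _ _ => 0
  end.

Definition alpha (O : operad) (eps : ob O 1 -> k) (M : smod) : rep O :=
  @Rep O (smob M) (@alpha_act O eps M).

End OperadDefs.

(* Main.v *)
Require Import Defs.
From HB Require Import structures.
From mathcomp Require Import all_boot all_order all_algebra all_fingroup.
From Stdlib Require Import FunctionalExtensionality.
Set Implicit Arguments.
Unset Strict Implicit.
Import GRing.Theory.
Local Open Scope ring_scope.

Lemma selfadd (V : zmodType) (x : V) : x = x + x -> x = 0.
Proof. by move=> h; have := congr1 (fun y => y - x) h; rewrite /= subrr addrK. Qed.

Lemma ocast_id (k : fieldType) (V : nat -> lmodType k) a (x : V a) :
  @ocast k V a a x = x.
Proof. by rewrite /ocast; case: eqP => // e; rewrite (eq_irrelevance e erefl). Qed.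

Lemma ocastK (k : fieldType) (V : nat -> lmodType k) a b c (e : a = b) (x : V a) :
  @ocast k V b c (@ocast k V a b x) = @ocast k V a c x.
Proof. by subst b; rewrite ocast_id. Qed.

Lemma ocast_lin (k : fieldType) (V : nat -> lmodType k) a b (s : k) (x y : V a) :
  @ocast k V a b (s *: x + y) = s *: @ocast k V a b x + @ocast k V a b y.
Proof.
rewrite /ocast; case: eqP => e; last by rewrite scaler0 addr0.
by subst b.
Qed.

Lemma ocast0 (k : fieldType) (V : nat -> lmodType k) a b : @ocast k V a b 0 = 0.
Proof.
have := @ocast_lin k V a b 1 0 0; rewrite !scale1r addr0; by move/selfadd.
Qed.

Lemma zero_of0 (k : fieldType) (O : operad k) (red : reduced O) c (e : c = 0%N)
  (y : ob O c) : y = 0.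
Proof. by subst c; apply: red. Qed.

Lemma pigeon m q (g : {ffun 'I_m -> 'I_q}) : (m < q)%N -> exists i, fibc g i = 0%N.
Proof.
move=> lt.
case: (pickP (fun i => fibc g i == 0%N)) => [i /eqP|H]; first by exists i.
exfalso.
have: [set: 'I_q] \subset g @: [set: 'I_m].
  apply/subsetP => i _; have := H i; rewrite /fibc => /negbT.
  rewrite cards_eq0 => /set0Pn [x]; rewrite inE => /eqP <-.
  by apply: imset_f; rewrite inE.
move/subset_leq_card; rewrite cardsT card_ord => H1.
have := leq_trans H1 (leq_imset_card _ _); rewrite cardsT card_ord.
by rewrite leqNgt lt.
Qed.

Lemma dfwith_same (I : eqType) (T : I -> Type) (f : forall i, T i) i (w : T i) :
  w = f i -> dfwith f w = f.
Proof.
move=> ->; apply: functional_extensionality_dep => j.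
by case: (dfwithP f (f i) j).
Qed.

Lemma fact_zero_fib (k : fieldType) (O : operad k) (F : rep O) (red : reduced O) :
  is_functor F -> forall m q (g : {ffun 'I_m -> 'I_q}) nu x i, fibc g i = 0%N ->
  fact (r:=F) (f:=g) nu x = 0.
Proof.
case=> _ H2 _ _ m q g nu x i e.
have := H2 _ _ g nu i 1 0 0 x.
rewrite !scale1r addr0 (dfwith_same (w := 0)); last by rewrite (zero_of0 red e (nu i)).
by move/selfadd.
Qed.

Lemma ogam_zero_fib (k : fieldType) (O : operad k) (red : reduced O) :
  is_operad O -> forall m q (g : {ffun 'I_m -> 'I_q}) a nu i, fibc g i = 0%N ->
  ogam (o:=O) (f:=g) a nu = 0.
Proof.
case=> _ H2 _ _ _ m q g a nu i e.
have := H2 _ _ g a nu i 1 0 0.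
rewrite !scale1r addr0 (dfwith_same (w := 0)); last by rewrite (zero_of0 red e (nu i)).
by move/selfadd.
Qed.

Lemma ogam_out0 (k : fieldType) (O : operad k) :
  is_operad O -> forall m q (g : {ffun 'I_m -> 'I_q}) nu, ogam (o:=O) (f:=g) 0 nu = 0.
Proof.
case=> H1 _ _ _ _ m q g nu.
have := H1 _ _ g nu 1 0 0; rewrite !scale1r addr0 ; by move/selfadd.
Qed.

Lemma fact0 (k : fieldType) (O : operad k) (F : rep O) :
  is_functor F -> forall m q (g : {ffun 'I_m -> 'I_q}) nu, fact (r:=F) (f:=g) nu 0 = 0.
Proof.
case=> H1 _ _ _ m q g nu.
have := H1 _ _ g nu 1 0 0; rewrite !scale1r addr0 ; by move/selfadd.
Qed.

Lemma part2 (k : fieldType) (O : operad k) (mu : ob O 2) (red : reduced O)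
  (F : rep O) : is_functor F -> simple_obj F -> in_Fmu mu F.
Proof.
move=> HF [[n0 [x0 nz]] Hs].
pose G n (x : fob F n) := forall p (f : {ffun 'I_n -> 'I_p}) nu,
  (p < n)%N -> fact (r:=F) (f:=f) nu x = 0.
have HG : subfunctor (F:=F) G.
  split.
  - by move=> n p f nu _; rewrite fact0.
  - move=> n a x y Gx Gy p f nu lt.
    by case: HF => H1 _ _ _; rewrite H1 Gx // Gy // scaler0 addr0.
  - move=> m n f nu x Gx p h nu' lt.
    case: (ltnP m n) => mn.
      have [i fi] := pigeon f mn.
      by rewrite (fact_zero_fib red HF nu x fi) fact0.
    case: (HF) => _ _ _ H4; rewrite -H4; apply: Gx.
    exact: leq_trans lt mn.
case: (Hs G HG) => [Z|A].
  exfalso; apply: nz.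
  elim/ltn_ind: n0 x0 => n IH x; apply: Z => p f nu lt; exact: IH.
move=> n x; rewrite /mutilde; apply: big1 => i _; exact: A.
Qed.


Lemma alpha_actE (k : fieldType) (O : operad k) (eps : ob O 1 -> k) (M : smod k) n
  (f : {ffun 'I_n -> 'I_n}) nu x :
  fact (r:=alpha eps M) (f:=f) nu x = alpha_sq (O:=O) eps (M:=M) (f:=f) nu x.
Proof.
rewrite /= /alpha_act; case: eqP => // e.
by rewrite (eq_irrelevance e erefl).
Qed.

Lemma alpha_actN (k : fieldType) (O : operad k) (eps : ob O 1 -> k) (M : smod k) m n
  (f : {ffun 'I_m -> 'I_n}) nu x : m <> n ->
  fact (r:=alpha eps M) (f:=f) nu x = 0.
Proof. by move=> mn; rewrite /= /alpha_act; case: eqP. Qed.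

Lemma sma_lin (k : fieldType) (M : smod k) (HM : is_smod M) n (s : 'S_n) :
  (sma (s:=M) s 0 = 0) /\ (forall (a : k) x, sma (s:=M) s (a *: x) = a *: sma (s:=M) s x).
Proof.
case: HM => H1 _ _.
have h0 : sma (s:=M) s 0 = 0.
  by have := H1 _ s 1 0 0; rewrite !scale1r addr0; move/selfadd.
split=> // a x; by rewrite -[a *: x]addr0 H1 h0 addr0.
Qed.

Lemma alpha0 (k : fieldType) (O : operad k) (eps : ob O 1 -> k) (M : smod k) (HM : is_smod M) m n
  (f : {ffun 'I_m -> 'I_n}) nu : fact (r:=alpha eps M) (f:=f) nu 0 = 0.
Proof.
case: (eqVneq m n) => [e|ne]; last by rewrite alpha_actN //; apply/eqP.
subst m; rewrite alpha_actE /alpha_sq; case: ifP => // _.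
by rewrite (sma_lin HM _).1 scaler0.
Qed.

Lemma fib1_inj m n (f : {ffun 'I_m -> 'I_n}) :
  (forall i, fibc f i = 1%N) -> injective f.
Proof.
move=> H x y Exy; have := H (f x); rewrite /fibc => /eqP/cards1P [z Hz].
have hx : x \in fibS f (f x) by rewrite inE.
have hy : y \in fibS f (f x) by rewrite inE Exy.
rewrite Hz !inE in hx hy; by rewrite (eqP hx) (eqP hy).
Qed.

Lemma allfibE n (f : {ffun 'I_n -> 'I_n}) :
  [forall i, fibc f i == 1%N] = injectiveb f.
Proof.
apply/idP/idP.
  move/forallP => H; apply/injectiveP; apply: fib1_inj => i; exact/eqP.
move/injectiveP => inj; apply/forallP => i.
have /codomP [x ->] := inj_card_onto inj (leqnn _) i.
rewrite /fibc; have -> : fibS f (f x) = [set x] by apply/setP => y; rewrite !inE (inj_eq inj).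
by rewrite cards1.
Qed.

Lemma mkpermE n (f : {ffun 'I_n -> 'I_n}) : injective f -> forall x, mkperm f x = f x.
Proof.
move=> inj x; rewrite /mkperm; case: injectiveP => [i|]; first by rewrite permE.
by [].
Qed.

Lemma fib_one s t (r : {ffun 'I_s -> 'I_t}) (es : s = 1%N) (et : t = 1%N) j :
  fibc r j = 1%N.
Proof.
subst; rewrite /fibc.
have -> : fibS r j = setT by apply/setP => x; rewrite !inE (fintype.ord1 (r x)) (fintype.ord1 j) eqxx.
by rewrite cardsT card_ord.
Qed.

Lemma eps0 (k : fieldType) (O : operad k) (eps : ob O 1 -> k)
  (Hel : forall (a : k) (x y : ob O 1), eps (a *: x + y) = a * eps x + eps y) :
  eps 0 = 0.
Proof. by have := Hel 1 0 0; rewrite scale1r addr0 mul1r; move/selfadd. Qed.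

Lemma eps_ogam11 (k : fieldType) (O : operad k) (eps : ob O 1 -> k)
  (HO : is_operad O) (Hu : unit_arity1 O) (He1 : eps (ounit O) = 1)
  (Hel : forall (a : k) (x y : ob O 1), eps (a *: x + y) = a * eps x + eps y)
  s t (r : {ffun 'I_s -> 'I_t}) (a : ob O t) (b : forall j, ob O (fibc r j))
  (es : s = 1%N) (et : t = 1%N) (j : 'I_t) :
  eps (@ocast k (ob O) s 1 (ogam (o:=O) (f:=r) a b))
  = eps (@ocast k (ob O) t 1 a) * eps (@ocast k (ob O) _ 1 (b j)).
Proof.
subst s t; rewrite !ocast_id.
have [c ->] := Hu.2 a.
rewrite -[c *: ounit O]addr0.
have H0 := ogam_out0 HO.
case: (HO) => H1 _ H3 _ _.
rewrite H1 H0 H3 !Hel He1 (eps0 Hel) (fintype.ord1 j).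
by rewrite !addr0 mulr1.
Qed.


Lemma alpha_functor (k : fieldType) (O : operad k) (eps : ob O 1 -> k) (M : smod k)
  (HO : is_operad O) (red : reduced O) (Hu : unit_arity1 O) (He1 : eps (ounit O) = 1)
  (Hel : forall (a : k) (x y : ob O 1), eps (a *: x + y) = a * eps x + eps y)
  (HM : is_smod M) : is_functor (alpha eps M).
Proof.
split.
- move=> m n f nu a x y.
  case: (eqVneq m n) => [e|ne]; last by rewrite !alpha_actN ?scaler0 ?addr0 //; apply/eqP.
  subst m; rewrite !alpha_actE /alpha_sq; case: ifP => _; last by rewrite scaler0 addr0.
  case: (HM) => H1 _ _; rewrite H1 scalerDr !scalerA; congr (_ *: _ + _).
  by rewrite mulrC.
- move=> m n f nu i a y z x.
  case: (eqVneq m n) => [e|ne]; last by rewrite !alpha_actN ?scaler0 ?addr0 //; apply/eqP.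
  subst m; rewrite !alpha_actE /alpha_sq; case: ifP => _; last by rewrite scaler0 addr0.
  have E (w : ob O (fibc f i)) :
    \prod_(j < n) eps (@ocast k (ob O) (fibc f j) 1 (@dfwith _ _ nu i w j))
    = eps (@ocast k (ob O) (fibc f i) 1 w) *
      \prod_(j < n | j != i) eps (@ocast k (ob O) (fibc f j) 1 (nu j)).
    rewrite (bigD1 i) //= dfwith_in; congr (_ * _).
    by apply: eq_bigr => j ji; rewrite dfwith_out // eq_sym.
  rewrite !E ocast_lin Hel.
  by rewrite !scalerA mulrDl scalerDl !mulrA.
- move=> n x; rewrite alpha_actE /alpha_sq.
  have inj : injective (idf n) by move=> a b; rewrite !ffunE.
  have hf1 : forall i, fibc (idf n) i = 1%N.
    by move=> i; apply/eqP; move: i; apply/forallP; rewrite allfibE; apply/injectiveP.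
  have -> : [forall i, fibc (idf n) i == 1%N] by apply/forallP => i; rewrite hf1.
  rewrite big1; last first.
    by move=> i _; rewrite /udec (ocastK _ (esym (hf1 i))) ocast_id He1.
  have -> : mkperm (idf n) = 1%g by apply/permP => i; rewrite mkpermE // perm1 ffunE.
  by case: HM => _ H2 _; rewrite scale1r H2.
- move=> m n p f g nu' nu x.
  case: (eqVneq m p) => [emp|nmp]; last first.
    rewrite [LHS]alpha_actN; last exact/eqP.
    case: (eqVneq m n) => [emn|nmn].
      subst n; rewrite [RHS]alpha_actN //; exact/eqP.
    have -> : fact (r:=alpha eps M) (f:=f) nu x = 0 by apply: alpha_actN; exact/eqP.
    by rewrite alpha0.
  subst p; case: (eqVneq m n) => [emn|nmn]; last first.
    have -> : fact (r:=alpha eps M) (f:=f) nu x = 0 by apply: alpha_actN; exact/eqP.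
    rewrite alpha0 // [LHS]alpha_actE /alpha_sq; case: ifP => // Hall.
    have Hinj : injective (compf g f).
      by apply: fib1_inj => c; apply/eqP; exact: (forallP Hall c).
    case: (ltngtP m n) => [lt|gt|eq]; last by rewrite eq eqxx in nmn.
      have [c Hc] : exists c, fibc g c != 1%N.
        case: (pickP (fun c => fibc g c != 1%N)) => [c Hc|H]; first by exists c.
        exfalso; have ginj : injective g.
          by apply: fib1_inj => c; have := H c; rewrite /= => /negbFE/eqP.
        by have := leq_card _ ginj; rewrite !card_ord leqNgt lt.
      rewrite (bigD1 c) //=.
      suff -> : dcomp (O:=O) (f:=f) (g:=g) nu' nu c = 0.
        by rewrite ocast0 (eps0 Hel) mul0r scale0r.
      case: (eqVneq (fibc g c) 0%N) => [z|nz].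
        by rewrite /dcomp (zero_of0 red z (nu' c)) (ogam_out0 HO).
      have h1 : fibc (compf g f) c = 1%N by apply/eqP; exact: (forallP Hall c).
      have lt2 : (fibc (compf g f) c < fibc g c)%N.
        by rewrite h1 ltn_neqAle eq_sym Hc lt0n nz.
      have [j hj] := pigeon (restr f g c) lt2.
      rewrite /dcomp; eapply ogam_zero_fib; [exact: red|exact: HO|exact: hj].
    exfalso; have finj : injective f.
      by move=> a b e; apply: Hinj; rewrite !ffunE e.
    by have := leq_card _ finj; rewrite !card_ord leqNgt gt.
  subst n; rewrite !alpha_actE /alpha_sq.
  case: (boolP [forall i, fibc f i == 1%N]) => Hf; last first.
    have -> : [forall i, fibc (compf g f) i == 1%N] = false.
      apply/negbTE; apply: contra Hf; rewrite !allfibE => /injectiveP Hinj.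
      by apply/injectiveP => a b e; apply: Hinj; rewrite !ffunE e.
    by rewrite (sma_lin HM _).1 scaler0 if_same.
  have fi : injective f by apply/injectiveP; rewrite -allfibE.
  case: (boolP [forall i, fibc g i == 1%N]) => Hg; last first.
    have -> : [forall i, fibc (compf g f) i == 1%N] = false.
      apply/negbTE; apply: contra Hg; rewrite !allfibE => /injectiveP Hinj.
      apply/injectiveP => a b.
      have /codomP [a' ->] := inj_card_onto fi (leqnn _) a.
      have /codomP [b' ->] := inj_card_onto fi (leqnn _) b.
      move=> e; congr (f _); apply: Hinj; by rewrite !ffunE.
    by [].
  have gi : injective g by apply/injectiveP; rewrite -allfibE.
  have gfi : injective (compf g f) by move=> a b; rewrite !ffunE => /gi/fi.
  have -> : [forall i, fibc (compf g f) i == 1%N] by rewrite allfibE; apply/injectiveP.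
  have hf1 c : fibc f c = 1%N by apply/eqP; exact: (forallP Hf c).
  have hg1 c : fibc g c = 1%N by apply/eqP; exact: (forallP Hg c).
  have hgf1 c : fibc (compf g f) c = 1%N.
    by apply/eqP; move: c; apply/forallP; rewrite allfibE; apply/injectiveP.
  have Hprod :
    \prod_(c < m) eps (@ocast k (ob O) _ 1 (dcomp (O:=O) (f:=f) (g:=g) nu' nu c))
    = (\prod_(c < m) eps (@ocast k (ob O) _ 1 (nu' c))) *
      \prod_(i < m) eps (@ocast k (ob O) _ 1 (nu i)).
    rewrite [X in _ = _ * X](partition_big g xpredT) //= -big_split /=.
    apply: eq_bigr => c _.
    have j : 'I_(fibc g c) by rewrite hg1; exact: ord0.
    rewrite /dcomp (@eps_ogam11 k O eps HO Hu He1 Hel _ _ _ _ _ (hgf1 c) (hg1 c) j) /=.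
    congr (_ * _).
    have e : fibc f (enum_val (A:=fibS g c) j) = fibc (restr f g c) j.
      by rewrite hf1 (@fib_one _ _ (restr f g c) (hgf1 c) (hg1 c)).
    rewrite (ocastK _ e).
    have gj : g (enum_val (A:=fibS g c) j) = c.
      by have := enum_valP j; rewrite inE => /eqP.
    rewrite (big_pred1 (enum_val (A:=fibS g c) j)) // => i /=.
    by rewrite -{1}gj (inj_eq gi).
  have Hp : mkperm (compf g f) = (mkperm f * mkperm g)%g.
    by apply/permP => i; rewrite permM !mkpermE // ffunE.
  rewrite Hprod Hp; case: (HM) => _ _ H3.
  by rewrite H3 (sma_lin HM _).2 scalerA mulrC.
Qed.


Unset Implicit Arguments.
Set Strict Implicit.

Theorem proposition3p9 (k : fieldType) (O : operad k) (mu : ob O 2)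
  (eps : ob O 1 -> k) :
  is_operad O -> reduced O -> unit_arity1 O -> right_leibniz mu ->
  (* eps is the augmentation O(1) = k -> k *)
  eps (ounit O) = 1 ->
  (forall (a : k) (x y : ob O 1), eps (a *: x + y) = a * eps x + eps y) ->
  (forall M : smod k, is_smod M ->
     is_functor (alpha eps M) /\ in_Fmu mu (alpha eps M)) /\
  (forall F : rep O, is_functor F -> simple_obj F -> in_Fmu mu F).
Proof.
move=> HO red Hu Hl He1 Hel; split.
  move=> M HM; split; first exact: alpha_functor.
  move=> n x; rewrite /mutilde; apply: big1 => i _; apply: alpha_actN.
  by move/eqP; rewrite (gtn_eqF (ltnSn n)).
move=> F HF Hs; eapply part2; [exact: red|exact: HF|exact: Hs].
Qed.
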